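(* Let $\mathfrak m_+,\mathfrak m_-$ be Lie subalgebras of $\mathfrak g$ with $\mathfrak l_r\subset\mathfrak m_+\oplus\mathfrak m_-$, and $\mathfrak t=\mathfrak m_+\cap\mathfrak m_-$. Then the following are equivalent: (i) $\mathfrak m_+\oplus\mathfrak m_-\subset\mathfrak n_{\mathfrak g\oplus\mathfrak g}(\mathfrak l_r)$ (the normalizer of $\mathfrak l_r$ in $\mathfrak g\oplus\mathfrak g$); (ii) $[\mathfrak m_+,\mathfrak f_+]\subset\mathfrak f_+^\perp$ and $[\mathfrak m_-,\mathfrak f_-]\subset\mathfrak f_-^\perp$; (iii) $\delta_r(x)=0$ for all $x\in\mathfrak t$.
   Context: $\mathfrak g$ is a real or complex Lie algebra and $r=\sum_ix_i\otimes y_i\in\mathfrak g\otimes\mathfrak g$ a factorizable quasitriangular $r$-matrix: $r+r^{21}$ is ad-invariant and nondegenerate and the classical Yang–Baxter equation holds. $\delta_r(x)=\mathrm{ad}_x(r)$. $r_+(\xi)=\sum_i\langle\xi,x_i\rangle y_i$, $r_-(\xi)=-\sum_i\langle\xi,y_i\rangle x_i$ ($\xi\in\mathfrak g^*$); $\langle a,b\rangle_{\mathfrak g}=\langle(r_+-r_-)^{-1}a,b\rangle$, $\perp$ orthogonality; $r^\flat_\pm=r_\pm\circ(r_+-r_-)^{-1}$; $\mathfrak f_\pm=\mathrm{Im}\,r_\pm$; $\mathfrak l_r=\{(r^\flat_+(x),r^\flat_-(x)):x\in\mathfrak g\}\subset\mathfrak g\oplus\mathfrak g$ (direct product Lie algebra).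 *)

(* Defs.v *)
(* A finite-dimensional Lie algebra g over a characteristic-0
   field K (numFieldType; covers R and C) is modelled as 'rV[K]_n with a bracket
   [br].  Tensors in g (x) g are coefficient matrices: T = sum_ij T i j e_i (x) e_j,
   and a (x) b  <->  a^T *m b.  The dual g^* is identified with 'rV[K]_n via
   the pairing <xi, x> = xi *m x^T. *)
From HB Require Import structures.
From mathcomp Require Import all_boot all_order all_algebra.
Set Implicit Arguments. Unset Strict Implicit. Unset Printing Implicit Defensive.
Import Order.TTheory GRing.Theory Num.Theory.
Local Open Scope ring_scope.

Section LieDefs.
Variables (K : numFieldType) (n : nat).
Implicit Types (br : 'rV[K]_n -> 'rV[K]_n -> 'rV[K]_n) (R T : 'M[K]_n)
  (x y a b xi : 'rV[K]_n).

Definition ev (i : 'I_n) : 'rV[K]_n := delta_mx 0 i.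

Definition is_lie_bracket br : Prop :=
  [/\ (forall (c : K) x y z, br (c *: x + y) z = c *: br x z + br y z),
      (forall (c : K) x y z, br x (c *: y + z) = c *: br x y + br x z),
      (forall x, br x x = 0) &
      (forall x y z, br x (br y z) + br y (br z x) + br z (br x y) = 0)].

Definition is_lie_subalgebra br (M : 'M[K]_n) : Prop :=
  forall x y, (x <= M)%MS -> (y <= M)%MS -> (br x y <= M)%MS.

Definition tens a b : 'M[K]_n := a^T *m b.

Definition ad2 br x T : 'M[K]_n :=
  \sum_(i < n) \sum_(j < n)
     T i j *: (tens (br x (ev i)) (ev j) + tens (ev i) (br x (ev j))).

Definition delta_r br R x : 'M[K]_n := ad2 br x R.

Definition tens3 a b (c : 'rV[K]_n) (t : 'I_n * 'I_n * 'I_n) : K :=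
  a 0 t.1.1 * b 0 t.1.2 * c 0 t.2.

(* coefficients of [r12,r13] + [r12,r23] + [r13,r23] in g (x) g (x) g *)
Definition CYB br R : {ffun 'I_n * 'I_n * 'I_n -> K} :=
  [ffun t => \sum_(i < n) \sum_(j < n) \sum_(k < n) \sum_(l < n)
    (R i j * R k l) *
      (tens3 (br (ev i) (ev k)) (ev j) (ev l) t
     + tens3 (ev i) (br (ev j) (ev k)) (ev l) t
     + tens3 (ev i) (ev k) (br (ev j) (ev l)) t)].

Definition factorizable br R : Prop :=
  [/\ (forall x, ad2 br x (R + R^T) = 0),
      R + R^T \in unitmx &
      (forall t, CYB br R t = 0)].

(* r_+(xi) = sum_i <xi,x_i> y_i,  r_-(xi) = - sum_i <xi,y_i> x_i *)
Definition r_plus R xi : 'rV[K]_n := xi *m R.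
Definition r_minus R xi : 'rV[K]_n := - (xi *m R^T).

(* (r_+ - r_-)^{-1}; note (r_+ - r_-)(xi) = xi *m (R + R^T) *)
Definition rpm_inv R a : 'rV[K]_n := a *m invmx (R + R^T).

Definition gform R a b : K := (rpm_inv R a *m b^T) 0 0.

Definition rflat_plus R x : 'rV[K]_n := r_plus R (rpm_inv R x).
Definition rflat_minus R x : 'rV[K]_n := r_minus R (rpm_inv R x).

Definition in_f_plus R y : Prop := exists xi, y = r_plus R xi.
Definition in_f_minus R y : Prop := exists xi, y = r_minus R xi.

Definition in_perp R (S : 'rV[K]_n -> Prop) a : Prop :=
  forall b, S b -> gform R a b = 0.

Definition in_lr R (p : 'rV[K]_n * 'rV[K]_n) : Prop :=
  exists x, p = (rflat_plus R x, rflat_minus R x).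

Definition in_normalizer_lr br R (p : 'rV[K]_n * 'rV[K]_n) : Prop :=
  forall x, in_lr R (br p.1 (rflat_plus R x), br p.2 (rflat_minus R x)).

End LieDefs.

(* Main.v *)
Require Import Defs.
From HB Require Import structures.
From mathcomp Require Import all_boot all_order all_algebra.
From mathcomp Require Import ring.
Import GRing.Theory.
Local Open Scope ring_scope.

Set Implicit Arguments. Unset Strict Implicit.

Definition dot (K : numFieldType) (n : nat) (u v : 'rV[K]_n) : K := (u *m v^T) 0 0.
Arguments dot {K n}.

Lemma brL (K : numFieldType) (n : nat) (br : 'rV[K]_n -> 'rV[K]_n -> 'rV[K]_n) :
  is_lie_bracket br ->
  [/\ forall z, br 0 z = 0, forall x y z, br (x + y) z = br x z + br y z,
      forall c x z, br (c *: x) z = c *: br x z & forall x z, br (- x) z = - br x z].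
Proof.
case=> HL _ _ _.
have H0 : forall z, br 0 z = 0.
  move=> z; have h := HL 1 0 0 z; rewrite !scale1r addr0 in h.
  by apply: (@addrI _ (br 0 z)); rewrite addr0 -h.
have HD : forall x y z, br (x + y) z = br x z + br y z.
  by move=> x y z; have := HL 1 x y z; rewrite !scale1r.
have HS : forall c x z, br (c *: x) z = c *: br x z.
  by move=> c x z; rewrite -[c *: x]addr0 HL H0 addr0.
split => // x z; by rewrite -scaleN1r HS scaleN1r.
Qed.

Lemma brR (K : numFieldType) (n : nat) (br : 'rV[K]_n -> 'rV[K]_n -> 'rV[K]_n) :
  is_lie_bracket br ->
  [/\ forall z, br z 0 = 0, forall x y z, br z (x + y) = br z x + br z y,
      forall c x z, br z (c *: x) = c *: br z x & forall x z, br z (- x) = - br z x].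
Proof.
case=> _ HL _ _.
have H0 : forall z, br z 0 = 0.
  move=> z; have h := HL 1 z 0 0; rewrite !scale1r addr0 in h.
  by apply: (@addrI _ (br z 0)); rewrite addr0 -h.
have HD : forall x y z, br z (x + y) = br z x + br z y.
  by move=> x y z; have := HL 1 z x y; rewrite !scale1r.
have HS : forall c x z, br z (c *: x) = c *: br z x.
  by move=> c x z; rewrite -[c *: x]addr0 HL H0 addr0.
split => // x z; by rewrite -scaleN1r HS scaleN1r.
Qed.

Lemma br_anti (K : numFieldType) (n : nat) (br : 'rV[K]_n -> 'rV[K]_n -> 'rV[K]_n) :
  is_lie_bracket br -> forall x y, br x y = - br y x.
Proof.
move=> Hb x y; have [_ HDL _ _] := brL Hb; have [_ HDR _ _] := brR Hb.
case: Hb => _ _ Ha _.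
have := Ha (x + y); rewrite HDL !HDR !Ha add0r addr0 => /eqP.
by rewrite addr_eq0 => /eqP.
Qed.

Lemma br_sumL (K : numFieldType) (n : nat) (br : 'rV[K]_n -> 'rV[K]_n -> 'rV[K]_n) :
  is_lie_bracket br -> forall (I : finType) (F : I -> 'rV[K]_n) z,
  br (\sum_i F i) z = \sum_i br (F i) z.
Proof.
move=> Hb I F z; have [H0 HD _ _] := brL Hb.
apply: (big_rec2 (fun a b => br a z = b)); first by rewrite H0.
by move=> i a b _ <-; rewrite HD.
Qed.

Lemma br_sumR (K : numFieldType) (n : nat) (br : 'rV[K]_n -> 'rV[K]_n -> 'rV[K]_n) :
  is_lie_bracket br -> forall (I : finType) (F : I -> 'rV[K]_n) z,
  br z (\sum_i F i) = \sum_i br z (F i).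
Proof.
move=> Hb I F z; have [H0 HD _ _] := brR Hb.
apply: (big_rec2 (fun a b => br z a = b)); first by rewrite H0.
by move=> i a b _ <-; rewrite HD.
Qed.

Lemma dotC (K : numFieldType) (n : nat) (u v : 'rV[K]_n) : dot u v = dot v u.
Proof. by rewrite /dot -[u *m v^T]trmxK trmx_mul trmxK mxE. Qed.

Lemma dotDl (K : numFieldType) (n : nat) (u v w : 'rV[K]_n) : dot (u + v) w = dot u w + dot v w.
Proof. by rewrite /dot mulmxDl mxE. Qed.
Lemma dotZl (K : numFieldType) (n : nat) c (u w : 'rV[K]_n) : dot (c *: u) w = c * dot u w.
Proof. by rewrite /dot -scalemxAl mxE. Qed.
Lemma dotNl (K : numFieldType) (n : nat) (u w : 'rV[K]_n) : dot (- u) w = - dot u w.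
Proof. by rewrite /dot mulNmx mxE. Qed.
Lemma dot0l (K : numFieldType) (n : nat) (w : 'rV[K]_n) : dot 0 w = 0.
Proof. by rewrite /dot mul0mx mxE. Qed.
Lemma dot_suml (K : numFieldType) (n : nat) (I : finType) (F : I -> 'rV[K]_n) w :
  dot (\sum_i F i) w = \sum_i dot (F i) w.
Proof. by rewrite /dot mulmx_suml summxE. Qed.
Lemma dot_evl (K : numFieldType) (n : nat) (j : 'I_n) (w : 'rV[K]_n) : dot (ev K j) w = w 0 j.
Proof.
rewrite /dot mxE (bigD1 j) //= big1 ?addr0; last first.
  by move=> k /negbTE nk; rewrite /ev mxE nk andbF mul0r.
by rewrite /ev !mxE !eqxx mul1r.
Qed.

Lemma rowvE (K : numFieldType) (n : nat) (w : 'rV[K]_n) : w = \sum_i w 0 i *: ev K i.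
Proof. exact: row_sum_delta. Qed.

Lemma dot_sumr (K : numFieldType) (n : nat) (I : finType) (F : I -> 'rV[K]_n) w :
  dot w (\sum_i F i) = \sum_i dot w (F i).
Proof. by rewrite dotC dot_suml; apply: eq_bigr => i _; rewrite dotC. Qed.
Lemma dotZr (K : numFieldType) (n : nat) c (u w : 'rV[K]_n) : dot w (c *: u) = c * dot w u.
Proof. by rewrite dotC dotZl dotC. Qed.
Lemma dotDr (K : numFieldType) (n : nat) (u v w : 'rV[K]_n) : dot w (u + v) = dot w u + dot w v.
Proof. by rewrite dotC dotDl !(@dotC _ _ w). Qed.
Lemma dotNr (K : numFieldType) (n : nat) (u w : 'rV[K]_n) : dot w (- u) = - dot w u.
Proof. by rewrite dotC dotNl dotC. Qed.
Lemma dot_evr (K : numFieldType) (n : nat) (j : 'I_n) (w : 'rV[K]_n) : dot w (ev K j) = w 0 j.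
Proof. by rewrite dotC dot_evl. Qed.

Lemma dot_brR (K : numFieldType) (n : nat) (br : 'rV[K]_n -> 'rV[K]_n -> 'rV[K]_n) :
  is_lie_bracket br -> forall u x w,
  dot u (br x w) = \sum_i w 0 i * dot u (br x (ev K i)).
Proof.
move=> Hb u x w; have [_ _ HS _] := brR Hb.
rewrite {1}(rowvE w) (br_sumR Hb) dot_sumr; apply: eq_bigr => i _.
by rewrite HS dotZr.
Qed.

Lemma dot_brL (K : numFieldType) (n : nat) (br : 'rV[K]_n -> 'rV[K]_n -> 'rV[K]_n) :
  is_lie_bracket br -> forall u v z,
  dot (br u v) z = \sum_i \sum_k u 0 i * v 0 k * dot (br (ev K i) (ev K k)) z.
Proof.
move=> Hb u v z; have [_ _ HS _] := brL Hb.
rewrite {1}(rowvE u) (br_sumL Hb) dot_suml; apply: eq_bigr => i _.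
rewrite HS dotZl dotC (dot_brR Hb) mulr_sumr; apply: eq_bigr => k _.
by rewrite dotC mulrA.
Qed.

Lemma mx11_mul (K : numFieldType) (A B : 'M[K]_1) : (A *m B) 0 0 = A 0 0 * B 0 0.
Proof. by rewrite mxE big_ord1. Qed.

Lemma ad2_pair (K : numFieldType) (n : nat) (br : 'rV[K]_n -> 'rV[K]_n -> 'rV[K]_n) :
  is_lie_bracket br -> forall x (T : 'M[K]_n) u v,
  (u *m ad2 br x T *m v^T) 0 0 = dot u (br x (v *m T^T)) + dot v (br x (u *m T)).
Proof.
move=> Hb x T u v.
have E : forall a b, (u *m tens a b *m v^T) 0 0 = dot u a * dot b v.
  move=> a b; rewrite /tens mulmxA -mulmxA mx11_mul.
  by rewrite /dot.
rewrite /ad2 mulmx_sumr mulmx_suml summxE.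
rewrite (dot_brR Hb) (dot_brR Hb) -big_split /=.
under eq_bigr => i _.
  rewrite mulmx_sumr mulmx_suml summxE.
  under eq_bigr => j _ do rewrite -scalemxAr -scalemxAl mxE mulmxDr mulmxDl mxE !E dot_evl dot_evr.
  over.
rewrite /=.
transitivity (\sum_i \sum_j (T i j * (dot u (br x (ev K i)) * v 0 j)) +
              \sum_i \sum_j (T i j * (u 0 i * dot (br x (ev K j)) v))).
  by rewrite -big_split; apply: eq_bigr => i _; rewrite -big_split; apply: eq_bigr => j _; rewrite mulrDr.
rewrite [X in _ + X]exchange_big -big_split; apply: eq_bigr => i _ /=.
congr (_ + _).
  rewrite !mxE mulr_suml; apply: eq_bigr => j _; rewrite !mxE; ring.
rewrite mxE mulr_suml dotC; apply: eq_bigr => j _; ring.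
Qed.

Lemma sum3_prod (K : numFieldType) (n : nat) (A B C : 'I_n -> K) :
  \sum_(t : 'I_n * 'I_n * 'I_n) A t.1.1 * B t.1.2 * C t.2 =
  (\sum_p A p) * (\sum_q B q) * (\sum_s C s).
Proof.
rewrite -(pair_bigA _ (fun pq s => A pq.1 * B pq.2 * C s)) /=.
rewrite -(pair_bigA _ (fun p q => \sum_s A p * B q * C s)) /=.
rewrite -mulrA big_distrl /=; apply: eq_bigr => p _.
rewrite big_distrl mulr_sumr /=; apply: eq_bigr => q _.
rewrite big_distrr mulr_sumr /=; apply: eq_bigr => s _; by rewrite !mulrA.
Qed.

Lemma tens3_contract (K : numFieldType) (n : nat) (a b c z1 z2 z3 : 'rV[K]_n) :
  \sum_t (z1 0 t.1.1 * z2 0 t.1.2 * z3 0 t.2) * tens3 a b c t =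
  dot a z1 * dot b z2 * dot c z3.
Proof.
rewrite /dot !mxE.
rewrite -(sum3_prod (fun p => a 0 p * z1^T p 0) (fun q => b 0 q * z2^T q 0)
   (fun s => c 0 s * z3^T s 0)).
apply: eq_bigr => t _; rewrite /tens3 !mxE; ring.
Qed.

Lemma Hm (K : numFieldType) (n : nat) (u v : 'rV[K]_n) (M N : 'M[K]_n) (D : 'I_n -> 'I_n -> K) :
  \sum_x \sum_y (u *m M) 0 x * (v *m N) 0 y * D x y =
  \sum_x \sum_a \sum_y \sum_b u 0 a * M a x * (v 0 b * N b y) * D x y.
Proof.
apply: eq_bigr => x _.
transitivity (\sum_y \sum_a \sum_b u 0 a * M a x * (v 0 b * N b y) * D x y).
  apply: eq_bigr => y _; rewrite !mxE big_distrl big_distrl /=; apply: eq_bigr => a _.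
  rewrite big_distrr big_distrl /=; apply: eq_bigr => b _ //.
by rewrite exchange_big.
Qed.

Lemma cyb_contract (K : numFieldType) (n : nat) (br : 'rV[K]_n -> 'rV[K]_n -> 'rV[K]_n)
  (R : 'M[K]_n) :
  is_lie_bracket br -> (forall t, CYB br R t = 0) -> forall z1 z2 z3,
  dot (br (z2 *m R^T) (z3 *m R^T)) z1 + dot (br (z1 *m R) (z3 *m R^T)) z2
  + dot (br (z1 *m R) (z2 *m R)) z3 = 0.
Proof.
move=> Hb Hc z1 z2 z3.
pose D1 i k := dot (br (ev K i) (ev K k)) z1.
pose D2 i k := dot (br (ev K i) (ev K k)) z2.
pose D3 i k := dot (br (ev K i) (ev K k)) z3.
have E0 : \sum_t (z1 0 t.1.1 * z2 0 t.1.2 * z3 0 t.2) * CYB br R t = 0.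
  by apply: big1 => t _; rewrite Hc mulr0.
rewrite -{}E0.
transitivity (\sum_i \sum_j \sum_k \sum_l (R i j * R k l) *
   (D1 i k * z2 0 j * z3 0 l + z1 0 i * D2 j k * z3 0 l + z1 0 i * z2 0 k * D3 j l)); last first.
  symmetry.
  transitivity (\sum_t \sum_i \sum_j \sum_k \sum_l (z1 0 t.1.1 * z2 0 t.1.2 * z3 0 t.2) *
     ((R i j * R k l) * (tens3 (br (ev K i) (ev K k)) (ev K j) (ev K l) t
     + tens3 (ev K i) (br (ev K j) (ev K k)) (ev K l) t
     + tens3 (ev K i) (ev K k) (br (ev K j) (ev K l)) t))).
    apply: eq_bigr => t _; rewrite ffunE mulr_sumr; apply: eq_bigr => i _.
    rewrite mulr_sumr; apply: eq_bigr => j _; rewrite mulr_sumr; apply: eq_bigr => k _.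
    by rewrite mulr_sumr.
  rewrite exchange_big; apply: eq_bigr => i _; rewrite exchange_big; apply: eq_bigr => j _.
  rewrite exchange_big; apply: eq_bigr => k _; rewrite exchange_big; apply: eq_bigr => l _.
  set w := fun t : 'I_n * 'I_n * 'I_n => z1 0 t.1.1 * z2 0 t.1.2 * z3 0 t.2.
  transitivity (R i j * R k l * (\sum_t w t * tens3 (br (ev K i) (ev K k)) (ev K j) (ev K l) t)
    + R i j * R k l * (\sum_t w t * tens3 (ev K i) (br (ev K j) (ev K k)) (ev K l) t)
    + R i j * R k l * (\sum_t w t * tens3 (ev K i) (ev K k) (br (ev K j) (ev K l)) t)).
    rewrite !mulr_sumr -!big_split; apply: eq_bigr => t _; rewrite /w /=; ring.
  rewrite !tens3_contract !dot_evl /D1 /D2 /D3; ring.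
have EA : dot (br (z2 *m R^T) (z3 *m R^T)) z1 =
   \sum_i \sum_j \sum_k \sum_l (R i j * R k l) * (D1 i k * z2 0 j * z3 0 l).
  rewrite (dot_brL Hb) Hm; apply: eq_bigr => i _; apply: eq_bigr => j _.
  apply: eq_bigr => k _; apply: eq_bigr => l _; rewrite !mxE /D1; ring.
have EB : dot (br (z1 *m R) (z3 *m R^T)) z2 =
   \sum_i \sum_j \sum_k \sum_l (R i j * R k l) * (z1 0 i * D2 j k * z3 0 l).
  rewrite (dot_brL Hb) Hm exchange_big; apply: eq_bigr => i _; apply: eq_bigr => j _.
  apply: eq_bigr => k _; apply: eq_bigr => l _; rewrite !mxE /D2; ring.
have EC : dot (br (z1 *m R) (z2 *m R)) z3 =
   \sum_i \sum_j \sum_k \sum_l (R i j * R k l) * (z1 0 i * z2 0 k * D3 j l).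
  rewrite (dot_brL Hb) Hm exchange_big; apply: eq_bigr => i _; apply: eq_bigr => j _.
  rewrite exchange_big; apply: eq_bigr => k _; apply: eq_bigr => l _; rewrite /D3; ring.
rewrite EA EB EC -!big_split; apply: eq_bigr => i _; rewrite -!big_split.
apply: eq_bigr => j _; rewrite -!big_split; apply: eq_bigr => k _; rewrite -!big_split.
by apply: eq_bigr => l _; rewrite /= -!mulrDr.
Qed.

Lemma dot_mulmx (K : numFieldType) (n : nat) (u v : 'rV[K]_n) (M : 'M[K]_n) :
  dot (u *m M) v = dot u (v *m M^T).
Proof. by rewrite /dot trmx_mul trmxK mulmxA. Qed.

Lemma rowv_eq0 (K : numFieldType) (n : nat) (v : 'rV[K]_n) :
  (forall eta, dot v eta = 0) -> v = 0.
Proof. by move=> H; apply/rowP => j; rewrite mxE -(H (ev K j)) dot_evr. Qed.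

Lemma mx_entry (K : numFieldType) (n : nat) (M : 'M[K]_n) i j :
  M i j = dot (ev K i *m M) (ev K j).
Proof. by rewrite dot_evr -rowE mxE. Qed.

Lemma Ssym (K : numFieldType) (n : nat) (R : 'M[K]_n) : (R + R^T)^T = R + R^T.
Proof. by rewrite linearD /= trmxK addrC. Qed.

Lemma Bsym (K : numFieldType) (n : nat) (R : 'M[K]_n) :
  (invmx (R + R^T))^T = invmx (R + R^T).
Proof. by rewrite trmx_inv Ssym. Qed.

Lemma BS (K : numFieldType) (n : nat) (R : 'M[K]_n) : R + R^T \in unitmx ->
  forall v : 'rV[K]_n, v *m invmx (R + R^T) *m (R + R^T) = v.
Proof. by move=> Su v; rewrite -mulmxA mulVmx // mulmx1. Qed.

Lemma SB (K : numFieldType) (n : nat) (R : 'M[K]_n) : R + R^T \in unitmx ->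
  forall v : 'rV[K]_n, v *m (R + R^T) *m invmx (R + R^T) = v.
Proof. by move=> Su v; rewrite -mulmxA mulmxV // mulmx1. Qed.

Lemma gformE (K : numFieldType) (n : nat) (R : 'M[K]_n) a b :
  gform R a b = dot (a *m invmx (R + R^T)) b.
Proof. by []. Qed.

Lemma gsym (K : numFieldType) (n : nat) (R : 'M[K]_n) a b : gform R a b = gform R b a.
Proof. by rewrite !gformE dot_mulmx Bsym dotC. Qed.

Lemma rp_rm (K : numFieldType) (n : nat) (R : 'M[K]_n) : R + R^T \in unitmx ->
  forall x, rflat_plus R x - rflat_minus R x = x.
Proof.
move=> Su x; rewrite /rflat_plus /rflat_minus /r_plus /r_minus /rpm_inv opprK.
by rewrite -mulmxDr BS.
Qed.

Lemma rpE (K : numFieldType) (n : nat) (R : 'M[K]_n) x :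
  rflat_plus R x = x *m invmx (R + R^T) *m R.
Proof. by []. Qed.
Lemma rmE (K : numFieldType) (n : nat) (R : 'M[K]_n) x :
  rflat_minus R x = - (x *m invmx (R + R^T) *m R^T).
Proof. by []. Qed.

Lemma rpB (K : numFieldType) (n : nat) (R : 'M[K]_n) u v :
  rflat_plus R (u - v) = rflat_plus R u - rflat_plus R v.
Proof. by rewrite !rpE !mulmxBl. Qed.
Lemma rpD (K : numFieldType) (n : nat) (R : 'M[K]_n) u v :
  rflat_plus R (u + v) = rflat_plus R u + rflat_plus R v.
Proof. by rewrite !rpE !mulmxDl. Qed.

Lemma lr_intro (K : numFieldType) (n : nat) (R : 'M[K]_n) : R + R^T \in unitmx ->
  forall u v, rflat_plus R (u - v) = u -> in_lr R (u, v).
Proof.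
move=> Su u v H; exists (u - v); congr pair => //.
have e := rp_rm Su (u - v); rewrite H in e.
by move/addrI/oppr_inj: e.
Qed.

Lemma lr_elim (K : numFieldType) (n : nat) (R : 'M[K]_n) : R + R^T \in unitmx ->
  forall u v, in_lr R (u, v) -> rflat_plus R (u - v) = u.
Proof. by move=> Su u v [w [-> ->]]; rewrite rp_rm. Qed.

Lemma ginv (K : numFieldType) (n : nat) (br : 'rV[K]_n -> 'rV[K]_n -> 'rV[K]_n)
  (R : 'M[K]_n) : is_lie_bracket br -> R + R^T \in unitmx ->
  (forall x, ad2 br x (R + R^T) = 0) ->
  forall x a b, gform R a (br x b) + gform R (br x a) b = 0.
Proof.
move=> Hb Su Hi x a b.
have := ad2_pair Hb x (R + R^T) (a *m invmx (R + R^T)) (b *m invmx (R + R^T)).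
rewrite Hi mulmx0 mul0mx mxE Ssym !BS // => /esym E.
by rewrite (@gsym _ _ R (br x a)) !gformE.
Qed.

Lemma gDl (K : numFieldType) (n : nat) (R : 'M[K]_n) u v c :
  gform R (u + v) c = gform R u c + gform R v c.
Proof. by rewrite !gformE mulmxDl dotDl. Qed.
Lemma gNl (K : numFieldType) (n : nat) (R : 'M[K]_n) u c :
  gform R (- u) c = - gform R u c.
Proof. by rewrite !gformE mulNmx dotNl. Qed.

Lemma gcyc (K : numFieldType) (n : nat) (br : 'rV[K]_n -> 'rV[K]_n -> 'rV[K]_n)
  (R : 'M[K]_n) : is_lie_bracket br -> R + R^T \in unitmx ->
  (forall x, ad2 br x (R + R^T) = 0) ->
  forall a b c, gform R (br a b) c = gform R (br b c) a.
Proof.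
move=> Hb Su Hi a b c.
have E := ginv Hb Su Hi b a c.
rewrite (@gsym _ _ R (br b c) a).
rewrite (br_anti Hb b a) gNl in E.
by move/eqP: E; rewrite subr_eq0 => /eqP ->.
Qed.

Lemma dot_g (K : numFieldType) (n : nat) (R : 'M[K]_n) : R + R^T \in unitmx ->
  forall v xi, dot v xi = gform R v (xi *m R) + gform R v (xi *m R^T).
Proof.
move=> Su v xi; rewrite !gformE -dotDr -mulmxDr dot_mulmx Bsym SB //.
Qed.

Lemma CORE_g (K : numFieldType) (n : nat) (br : 'rV[K]_n -> 'rV[K]_n -> 'rV[K]_n)
  (R : 'M[K]_n) : is_lie_bracket br -> factorizable br R ->
  forall x1 x2 x3,
  gform R (br (x1 *m R) (x2 *m R)) (x3 *m R) + gform R (br (x1 *m R^T) (x2 *m R^T)) (x3 *m R^T) = 0.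
Proof.
move=> Hb [Hi Su Hc] x1 x2 x3.
have E := cyb_contract Hb Hc x1 x2 x3.
rewrite !(dot_g Su) in E.
set a1 := x1 *m R in E *; set a2 := x2 *m R in E *; set a3 := x3 *m R in E *.
set b1 := x1 *m R^T in E *; set b2 := x2 *m R^T in E *; set b3 := x3 *m R^T in E *.
rewrite (gcyc Hb Su Hi a1 b3 b2) (br_anti Hb b3 b2) gNl in E.
rewrite (gcyc Hb Su Hi a1 b3 a2) (gcyc Hb Su Hi b3 a2 a1) (br_anti Hb a2 a1) gNl in E.
rewrite (gcyc Hb Su Hi b1 b2 b3) -[RHS]E; ring.
Qed.

Lemma lr_closed (K : numFieldType) (n : nat) (br : 'rV[K]_n -> 'rV[K]_n -> 'rV[K]_n)
  (R : 'M[K]_n) : is_lie_bracket br -> factorizable br R ->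
  forall w x, rflat_plus R (br (rflat_plus R w) (rflat_plus R x)
                 - br (rflat_minus R w) (rflat_minus R x))
              = br (rflat_plus R w) (rflat_plus R x).
Proof.
move=> Hb Hf w x; have Hf' := Hf; case: Hf' => Hi Su Hc.
have [_ _ _ HNL] := brL Hb; have [_ _ _ HNR] := brR Hb.
set c := br (rflat_plus R w) (rflat_plus R x).
rewrite !rmE HNL HNR opprK.
set d := br _ _.
have ec : rflat_plus R c = c + rflat_minus R c.
  by apply/eqP; rewrite -subr_eq; apply/eqP; exact: rp_rm.
rewrite rpB ec -addrA.
suff -> : rflat_minus R c - rflat_plus R d = 0 by rewrite addr0.
rewrite rmE rpE -opprD.
suff -> : c *m invmx (R + R^T) *m R^T + d *m invmx (R + R^T) *m R = 0 by rewrite oppr0.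
apply: rowv_eq0 => eta.
rewrite dotDl !dot_mulmx trmxK.
have := CORE_g Hb Hf (w *m invmx (R + R^T)) (x *m invmx (R + R^T)) eta.
by rewrite !gformE !dot_mulmx Bsym.
Qed.

Theorem lemma4p11 (K : numFieldType) (n : nat)
  (br : 'rV[K]_n -> 'rV[K]_n -> 'rV[K]_n) (R Mp Mm : 'M[K]_n) :
  is_lie_bracket br ->
  factorizable br R ->
  is_lie_subalgebra br Mp ->
  is_lie_subalgebra br Mm ->
  (forall x, (rflat_plus R x <= Mp)%MS /\ (rflat_minus R x <= Mm)%MS) ->
  [<-> (forall a b, (a <= Mp)%MS -> (b <= Mm)%MS -> in_normalizer_lr br R (a, b));
       (forall x y, (x <= Mp)%MS -> in_f_plus R y ->
                    in_perp R (in_f_plus R) (br x y)) /\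
       (forall x y, (x <= Mm)%MS -> in_f_minus R y ->
                    in_perp R (in_f_minus R) (br x y));
       (forall x, (x <= Mp :&: Mm)%MS -> delta_r br R x = 0)].
Proof.
move=> Hb Hf HMp HMm Hl.
have Hf' := Hf; case: Hf' => Hi Su Hc.
have [H0L HDL HSL HNL] := brL Hb; have [H0R HDR HSR HNR] := brR Hb.
have gp : forall u eta, gform R u (r_plus R eta) = dot (u *m invmx (R + R^T) *m R^T) eta.
  by move=> u eta; rewrite [RHS]dot_mulmx trmxK.
have gm : forall u eta, gform R u (r_minus R eta) = - dot (u *m invmx (R + R^T) *m R) eta.
  by move=> u eta; rewrite [in RHS]dot_mulmx gformE /r_minus dotNr.
have P01 : (forall a b, (a <= Mp)%MS -> (b <= Mm)%MS -> in_normalizer_lr br R (a, b)) ->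
       (forall x y, (x <= Mp)%MS -> in_f_plus R y ->
                    in_perp R (in_f_plus R) (br x y)) /\
       (forall x y, (x <= Mm)%MS -> in_f_minus R y ->
                    in_perp R (in_f_minus R) (br x y)).
  move=> H0; split.
  - move=> x y Hx [xi ->] b [eta ->].
    have := H0 x 0 Hx (sub0mx _ _) (xi *m (R + R^T)); rewrite /= H0L rpE (SB Su).
    move/(lr_elim Su); rewrite subr0 => e.
    have em : rflat_minus R (br x (xi *m R)) = 0.
      have := rp_rm Su (br x (xi *m R)); rewrite e => /eqP.
      by rewrite subr_eq addrC -subr_eq subrr eq_sym => /eqP.
    rewrite rmE in em; move/eqP: em; rewrite oppr_eq0 => /eqP em.
    by rewrite gp /r_plus em dot0l.
  - move=> x y Hx [xi ->] b [eta ->].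
    have := H0 0 x (sub0mx _ _) Hx (xi *m (R + R^T)); rewrite /= H0L rmE (SB Su).
    move/(lr_elim Su); rewrite sub0r rpE mulNmx mulNmx => /eqP; rewrite oppr_eq0 => /eqP e.
    by rewrite gm /r_minus e dot0l oppr0.
have P10 : (forall x y, (x <= Mp)%MS -> in_f_plus R y ->
                    in_perp R (in_f_plus R) (br x y)) /\
       (forall x y, (x <= Mm)%MS -> in_f_minus R y ->
                    in_perp R (in_f_minus R) (br x y)) ->
       (forall a b, (a <= Mp)%MS -> (b <= Mm)%MS -> in_normalizer_lr br R (a, b)).
  move=> [H1 H2] a b Ha Hb' x; rewrite /in_normalizer_lr /=.
  apply: (lr_intro Su).
  set u := br a _; set v := br b _.
  have hu : u *m invmx (R + R^T) *m R^T = 0.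
    apply: rowv_eq0 => eta; rewrite -gp.
    apply: (H1 a _ Ha _ (r_plus R eta)); [by exists (rpm_inv R x) | by exists eta].
  have hv : v *m invmx (R + R^T) *m R = 0.
    apply: rowv_eq0 => eta; apply/eqP; rewrite -oppr_eq0 -gm; apply/eqP.
    apply: (H2 b _ Hb' _ (r_minus R eta)); [by exists (rpm_inv R x) | by exists eta].
  rewrite rpB [rflat_plus R v]rpE hv subr0.
  by have := rp_rm Su u; rewrite rmE hu oppr0 subr0.
have P02 : (forall a b, (a <= Mp)%MS -> (b <= Mm)%MS -> in_normalizer_lr br R (a, b)) ->
       (forall x, (x <= Mp :&: Mm)%MS -> delta_r br R x = 0).
  move=> H0 x; rewrite sub_capmx => /andP [hp hm].
  have comm : forall w, br x (rflat_plus R w) = rflat_plus R (br x w).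
    move=> w; have := H0 x x hp hm w; move/(lr_elim Su) => /= e.
    by rewrite -HNR -HDR (rp_rm Su) in e; rewrite e.
  rewrite /delta_r; apply/matrixP => i j; rewrite mx_entry [RHS]mxE /dot (ad2_pair Hb).
  move: (ev K i) (ev K j) => u v.
  have eR : u *m R = rflat_plus R (u *m (R + R^T)) by rewrite rpE (SB Su).
  rewrite eR comm rpE (@dotC _ _ v) !dot_mulmx Bsym.
  have G := ginv Hb Su Hi x (v *m R^T) (u *m (R + R^T)).
  rewrite !gformE [dot (br x _ *m _) _]dot_mulmx Bsym (SB Su) in G.
  by rewrite (@dotC _ _ u) addrC -[RHS]G (@dotC _ _ (br x (u *m (R + R^T)))).
have P20 : (forall x, (x <= Mp :&: Mm)%MS -> delta_r br R x = 0) ->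
       (forall a b, (a <= Mp)%MS -> (b <= Mm)%MS -> in_normalizer_lr br R (a, b)).
  move=> H2 a b Ha Hb' x; rewrite /in_normalizer_lr /=.
  set w := a - b. set t0 := a - rflat_plus R w.
  have erp : rflat_plus R w = w + rflat_minus R w.
    by apply/eqP; rewrite -subr_eq; apply/eqP; exact: rp_rm.
  have et : t0 = b - rflat_minus R w.
    rewrite /t0 erp /w opprD addrA opprB [a + (b - a)]addrC subrK //.
  have ht0 : (t0 <= Mp :&: Mm)%MS.
    rewrite sub_capmx; apply/andP; split.
      by rewrite /t0 addmx_sub // eqmx_opp; exact: (Hl w).1.
    by rewrite et addmx_sub // eqmx_opp; exact: (Hl w).2.
  have Hd := H2 t0 ht0; rewrite /delta_r in Hd.
  have comm : forall z, br t0 (rflat_plus R z) = rflat_plus R (br t0 z).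
    move=> z; apply/eqP; rewrite -subr_eq0; apply/eqP; apply: rowv_eq0 => eta.
    rewrite dotDl dotNl; apply/eqP; rewrite subr_eq0; apply/eqP.
    have E := ad2_pair Hb t0 R (z *m invmx (R + R^T)) eta.
    rewrite Hd mulmx0 mul0mx mxE in E.
    have G := ginv Hb Su Hi t0 z (eta *m R^T).
    rewrite !gformE in G.
    rewrite dotC !rpE [in RHS]dot_mulmx.
    by apply: (@addrI _ (dot (z *m invmx (R + R^T)) (br t0 (eta *m R^T)))); rewrite -E G.
  apply: (lr_intro Su).
  have ea : a = rflat_plus R w + t0 by rewrite /t0 addrC subrK.
  have eb : b = rflat_minus R w + t0 by rewrite et addrC subrK.
  clearbody t0; rewrite ea eb !HDL opprD addrACA.
  have eQ : br t0 (rflat_plus R x) - br t0 (rflat_minus R x) = br t0 x.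
    by rewrite -HNR -HDR rp_rm.
  by rewrite eQ rpD (lr_closed Hb Hf) comm.
tfae.
- exact: P01.
- by move=> H; apply: P02; apply: P10.
- exact: P20.
Qed.
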